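(* In every Choi-defined resource theory, the free operations coincide with the completely resource-non-generating operations: a channel $\mathcal{M}_{A\to B}$ is free if and only if for every system $R$ and every free state $\sigma_{AR}$, the state $(\mathcal{M}_{A\to B}\otimes\mathcal{I}_R)(\sigma_{AR})$ is free.
   Context: A quantum resource theory specifies, for all finite-dimensional systems, a set of free channels containing the identity, swap and discarding (partial trace) channels and closed under sequential and parallel composition; free states are those preparable by free channels (so free channels map free states to free states), and the family of free states is closed under tensor product, partial trace and system swaps. For a channel $\mathcal{M}_{A\to B}$ its renormalized Choi matrix is $\frac{1}{d_A}(\mathcal{M}_{A\to B}\otimes\mathcal{I}_{A'})(\Phi_{AA'})$, where $A'$ is a copy of $A$, $d_A=\dim A$ and $\Phi_{AA'}=\sum_{x,y}|x\rangle\langle y|_A\otimes|x\rangle\langle y|_{A'}$ for a fixed orthonormal basis. A Choi-defined resource theory (CDRT) is a resource theory in which a channel is free if and only if its renormalized Choi matrix is a free state. A channel $\mathcal{M}_{A\to B}$ is completely resource-non-generating (CRNG) if $(\mathcal{M}_{A\to B}\otimes\mathcal{I}_R)(\sigma_{AR})$ is free for every system $R$ and every free state $\sigma_{AR}$. *)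

(* Defs.v *)
From HB Require Import structures.
From mathcomp Require Import all_boot all_order all_algebra.
From mathcomp Require Import mxtens complex.
From mathcomp Require Import reals.

Set Implicit Arguments.
Unset Strict Implicit.
Unset Printing Implicit Defensive.

Import Order.TTheory GRing.Theory Num.Theory.
Local Open Scope ring_scope.

Section QRT.
Variable C : numClosedFieldType.

(* A system is identified by its (positive) dimension d; operators are 'M[C]_d.
   The composite system A B has dimension dA * dB, with the index convention
   of mxtens (mxtens_index (i, k) for i : 'I_dA, k : 'I_dB), and A *t B is the
   Kronecker/tensor product of matrices. *)

Definition psd n (A : 'M[C]_n) : Prop :=
  forall v : 'cV[C]_n, 0 <= ((map_mx Num.conj v)^T *m A *m v) 0 0.

Definition is_state n (rho : 'M[C]_n) : Prop := psd rho /\ \tr rho = 1.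

Definition tensor_map m1 n1 m2 n2 (M : 'M[C]_m1 -> 'M[C]_n1)
  (N : 'M[C]_m2 -> 'M[C]_n2) (X : 'M[C]_(m1 * m2)) : 'M[C]_(n1 * n2) :=
  \sum_(i < m1) \sum_(j < m1) \sum_(k < m2) \sum_(l < m2)
     X (mxtens_index (i, k)) (mxtens_index (j, l))
       *: (M (delta_mx i j) *t N (delta_mx k l)).

Definition linear_map m n (M : 'M[C]_m -> 'M[C]_n) : Prop :=
  forall (a : C) (X Y : 'M[C]_m), M (a *: X + Y) = a *: M X + M Y.

Definition trace_preserving m n (M : 'M[C]_m -> 'M[C]_n) : Prop :=
  forall X : 'M[C]_m, \tr (M X) = \tr X.

Definition completely_positive m n (M : 'M[C]_m -> 'M[C]_n) : Prop :=
  forall r (X : 'M[C]_(m * r)), psd X -> psd (tensor_map M (@id 'M[C]_r) X).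

Definition is_channel m n (M : 'M[C]_m -> 'M[C]_n) : Prop :=
  [/\ linear_map M, completely_positive M & trace_preserving M].

Definition swap_map m n (X : 'M[C]_(m * n)) : 'M[C]_(n * m) :=
  \sum_(i < m) \sum_(j < m) \sum_(k < n) \sum_(l < n)
     X (mxtens_index (i, k)) (mxtens_index (j, l))
       *: (delta_mx k l *t delta_mx i j).

Definition ptrace2 m n (X : 'M[C]_(m * n)) : 'M[C]_m :=
  \matrix_(i, j) \sum_(k < n) X (mxtens_index (i, k)) (mxtens_index (j, k)).

(* preparation channel of rho from the trivial (1-dimensional) system *)
Definition prep n (rho : 'M[C]_n) (X : 'M[C]_1) : 'M[C]_n := \tr X *: rho.

(* unnormalized maximally entangled operator Phi_{AA'} *)
Definition maxent m : 'M[C]_(m * m) :=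
  \sum_(x < m) \sum_(y < m) (delta_mx x y *t delta_mx x y).

Definition choi m n (M : 'M[C]_m -> 'M[C]_n) : 'M[C]_(n * m) :=
  (m%:R)^-1 *: tensor_map M (@id 'M[C]_m) (maxent m).

Record resource_theory := ResourceTheory {
  is_free : forall m n, ('M[C]_m -> 'M[C]_n) -> Prop;
  free_is_channel : forall m n (M : 'M[C]_m -> 'M[C]_n),
    (0 < m)%N -> (0 < n)%N -> is_free M -> is_channel M;
  free_id : forall m, (0 < m)%N -> is_free (@id 'M[C]_m);
  free_swap : forall m n, (0 < m)%N -> (0 < n)%N -> is_free (@swap_map m n);
  free_ptrace : forall m n, (0 < m)%N -> (0 < n)%N -> is_free (@ptrace2 m n);
  free_comp : forall a b c (M : 'M[C]_a -> 'M[C]_b) (N : 'M[C]_b -> 'M[C]_c),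
    (0 < a)%N -> (0 < b)%N -> (0 < c)%N -> is_free M -> is_free N -> is_free (N \o M);
  free_tens : forall m1 n1 m2 n2 (M : 'M[C]_m1 -> 'M[C]_n1) (N : 'M[C]_m2 -> 'M[C]_n2),
    (0 < m1)%N -> (0 < n1)%N -> (0 < m2)%N -> (0 < n2)%N ->
    is_free M -> is_free N -> is_free (tensor_map M N)
}.

Definition free_state (T : resource_theory) n (rho : 'M[C]_n) : Prop :=
  is_state rho /\ is_free T (prep rho).

Definition choi_defined (T : resource_theory) : Prop :=
  forall m n (M : 'M[C]_m -> 'M[C]_n), (0 < m)%N -> (0 < n)%N -> is_channel M ->
    (is_free T M <-> free_state T (choi M)).

Definition CRNG (T : resource_theory) m n (M : 'M[C]_m -> 'M[C]_n) : Prop :=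
  forall r, (0 < r)%N -> forall sigma : 'M[C]_(m * r),
    free_state T sigma -> free_state T (tensor_map M (@id 'M[C]_r) sigma).

End QRT.

(* Main.v *)
Require Import Defs.
From HB Require Import structures.
From mathcomp Require Import all_boot all_order all_algebra.
From mathcomp Require Import mxtens complex.
From mathcomp Require Import reals.
From Stdlib Require Import FunctionalExtensionality.

Set Implicit Arguments.
Unset Strict Implicit.
Unset Printing Implicit Defensive.
Import Order.TTheory GRing.Theory Num.Theory.
Local Open Scope ring_scope.

Section Helpers.
Variable C : numClosedFieldType.

Lemma tensor_mapZ m1 n1 m2 n2 (M : 'M[C]_m1 -> 'M[C]_n1)
  (N : 'M[C]_m2 -> 'M[C]_n2) (a : C) (X : 'M[C]_(m1 * m2)) :
  tensor_map M N (a *: X) = a *: tensor_map M N X.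
Proof.
rewrite /tensor_map scaler_sumr; apply: eq_bigr => i _.
rewrite scaler_sumr; apply: eq_bigr => j _.
rewrite scaler_sumr; apply: eq_bigr => k _.
rewrite scaler_sumr; apply: eq_bigr => l _.
by rewrite mxE scalerA.
Qed.

Lemma sum_tens_index m n (F : 'I_(m * n) -> C) :
  \sum_(p < m * n) F p = \sum_(i < m) \sum_(k < n) F (mxtens_index (i, k)).
Proof.
rewrite pair_big /= (reindex (@mxtens_index m n)) /=; last first.
  by exists (@mxtens_unindex m n) => x _; rewrite (mxtens_indexK, mxtens_unindexK).
by apply: eq_bigr => -[i k] _.
Qed.

Lemma tr_tens m n (A : 'M[C]_m) (B : 'M[C]_n) : \tr (A *t B) = \tr A * \tr B.
Proof.
rewrite /mxtrace mulr_sum; apply: eq_bigr => k _; by rewrite mxE.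
Qed.

Lemma tr_delta m (i j : 'I_m) : \tr (delta_mx i j : 'M[C]_m) = (i == j)%:R.
Proof.
rewrite /mxtrace (bigD1 i) //= big1 ?addr0; first by rewrite mxE eqxx.
by move=> k /negPf nk; rewrite mxE nk.
Qed.

Lemma tr_sum n k (F : 'I_k -> 'M[C]_n) :
  \tr (\sum_(i < k) F i) = \sum_(i < k) \tr (F i).
Proof. exact: (big_morph _ (@mxtraceD C n) (@mxtrace0 C n)). Qed.

Lemma sum_single (V : nmodType) m (i : 'I_m) (F : 'I_m -> V) :
  (forall j, j != i -> F j = 0) -> \sum_(j < m) F j = F i.
Proof.
by move=> h; rewrite (bigD1 i) //= big1 ?addr0.
Qed.

Lemma tensor_map_tr m n r (M : 'M[C]_m -> 'M[C]_n) (X : 'M[C]_(m * r)) :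
  trace_preserving M -> \tr (tensor_map M (@id 'M[C]_r) X) = \tr X.
Proof.
move=> tp; rewrite [RHS]/mxtrace sum_tens_index /tensor_map tr_sum.
apply: eq_bigr => i _.
rewrite tr_sum (@sum_single _ _ i); last first.
  move=> j nj; rewrite tr_sum; apply: big1 => k _.
  rewrite tr_sum; apply: big1 => l _.
  by rewrite mxtraceZ tr_tens tp tr_delta eq_sym (negPf nj) mul0r mulr0.
rewrite tr_sum; apply: eq_bigr => k _.
rewrite tr_sum (@sum_single _ _ k); last first.
  by move=> l nl; rewrite mxtraceZ tr_tens tp !tr_delta eq_sym (negPf nl) mulr0 mulr0.
by rewrite mxtraceZ tr_tens tp !tr_delta !eqxx mulr1 mulr1.
Qed.

Lemma tensor_map_idid m r (X : 'M[C]_(m * r)) :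
  tensor_map (@id 'M[C]_m) (@id 'M[C]_r) X = X.
Proof.
apply/matrixP => p q.
case: (mxtens_indexP p) => i0 k0; case: (mxtens_indexP q) => j0 l0.
rewrite /tensor_map summxE (@sum_single _ _ i0); last first.
  move=> i ni; rewrite summxE; apply: big1 => j _.
  rewrite summxE; apply: big1 => k _; rewrite summxE; apply: big1 => l _.
  by rewrite mxE tensmxE !mxE eq_sym (negPf ni) /= mul0r mulr0.
rewrite summxE (@sum_single _ _ j0); last first.
  move=> j nj; rewrite summxE; apply: big1 => k _.
  rewrite summxE; apply: big1 => l _.
  by rewrite mxE tensmxE !mxE [j0 == j]eq_sym (negPf nj) andbF /= mul0r mulr0.
rewrite summxE (@sum_single _ _ k0); last first.
  move=> k nk; rewrite summxE; apply: big1 => l _.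
  by rewrite mxE tensmxE !mxE [k0 == k]eq_sym (negPf nk) /= mulr0 mulr0.
rewrite summxE (@sum_single _ _ l0); last first.
  by move=> l nl; rewrite mxE tensmxE !mxE [l0 == l]eq_sym (negPf nl) andbF /= mulr0 mulr0.
by rewrite mxE tensmxE !mxE !eqxx /= mulr1 mulr1.
Qed.

End Helpers.

Theorem theorem2 (R : realType) (T : resource_theory R[i]) :
  choi_defined T ->
  forall (dA dB : nat) (M : 'M[R[i]]_dA -> 'M[R[i]]_dB),
    (0 < dA)%N -> (0 < dB)%N -> is_channel M ->
    (is_free T M <-> CRNG T M).
Proof.
move=> hC dA dB M hA hB chM; split.
- move=> fM r hr sigma [[psds trs] fs].
  case: chM => linM cpM tpM.
  split; first split.
  + exact: cpM.
  + by rewrite tensor_map_tr.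
  + have -> : prep (tensor_map M (@id 'M[R[i]]_r) sigma) =
              (tensor_map M (@id 'M[R[i]]_r)) \o (prep sigma).
      by apply: functional_extensionality => X; rewrite /prep /= tensor_mapZ.
    apply: free_comp => //; rewrite ?muln_gt0 ?hA ?hB ?hr //.
    by apply: free_tens => //; apply: free_id.
- move=> crng.
  apply/(hC _ _ M hA hB chM).
  have fid : is_free T (@id 'M[R[i]]_dA) by apply: free_id.
  have chid := free_is_channel hA hA fid.
  have := (proj1 (hC _ _ _ hA hA chid) fid) => fchoi.
  have := crng dA hA _ fchoi.
  by rewrite /choi tensor_map_idid tensor_mapZ.
Qed.
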